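(* Let $G$ be a finitely generated group, $(\mathfrak C,D,\mathfrak B)$ a differential category over $\mathbb F$ (where $\mathbb F=\mathbb R$ or $\mathbb C$), and $R$ a representation of $G$ in $\mathfrak C$. Then either (i) $R$ is trivial, or (ii) $D\circ R$ is non-trivial, or (iii) there exists a non-trivial representation of $G$ in $\mathbb F$, i.e. a non-trivial group homomorphism $G\to(\mathbb F,+)$.
   Context: A right linear category over $\mathbb F$ is a category $\mathfrak C$ in which each hom set $\mathfrak C(a,a')$ is an $\mathbb F$-vector space (with zero $0_{a',a}$), such that for every $c\in\mathfrak C(a,a')$ the map $-\circ c:\mathfrak C(a',a'')\to\mathfrak C(a,a'')$ is linear, and $f\circ 0_{a',a}=0_{a'',a}$ for all $f\in\mathfrak C(a',a'')$. A linear category additionally satisfies the dual conditions ($c\circ-$ linear and $0\circ f=0$). A norm on $\mathfrak C$ is a choice of norm on each hom space; it is submultiplicative if $\|1_a\|=1$ and $\|c'\circ c\|\le\|c'\|\|c\|$. A Banach category is a linear category with a submultiplicative norm for which every hom space is complete. A functor between right linear categories is linear if it is linear on each hom space. A $\mathfrak B$-differential on a right linear category $\mathfrak C$ is a linear functor $D:\mathfrak C\to\mathfrak B$ into a Banach category $\mathfrak B$ for which there exists a sequence $(\|\cdot\|_n)_{n\ge1}$ of norms on $\mathfrak C$ (norms on each hom space) with $\limsup_{n\to\infty}\frac{\|c\circ c'-c\circ c''\|_n}{\|c'-c''\|_n}\le\|Dc\|$ for all $c\in\mathfrak C(a',a'')$ and all distinct $c',c''\in\mathfrak C(a,a')$;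 a differential category is such a triple $(\mathfrak C,D,\mathfrak B)$. A representation of the group $G$ in a category $\mathfrak C$ is a functor from $G$ (viewed as a one-object groupoid) to $\mathfrak C$, i.e. a homomorphism $R:G\to\mathfrak C^{-1}(a,a)$ into the group of invertible endomorphisms of some object $a$; it is trivial if it is constant (equal to $1_a$). *)

(* Defs.v *)
From Stdlib Require Import Reals List.
From Coquelicot Require Export Coquelicot.
Open Scope R_scope.

Record Group := {
  gcar :> Type;
  gmul : gcar -> gcar -> gcar;
  gone : gcar;
  ginv : gcar -> gcar;
  gmul_assoc : forall x y z, gmul x (gmul y z) = gmul (gmul x y) z;
  gmul_1l : forall x, gmul gone x = x;
  gmul_Vl : forall x, gmul (ginv x) x = gone
}.

Inductive generated (G : Group) (S : list (gcar G)) : gcar G -> Prop :=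
| gen_in : forall x, In x S -> generated G S x
| gen_one : generated G S (gone G)
| gen_mul : forall x y, generated G S x -> generated G S y -> generated G S (gmul G x y)
| gen_inv : forall x, generated G S x -> generated G S (ginv G x).

Definition finitely_generated (G : Group) : Prop :=
  exists S : list (gcar G), forall g, generated G S g.

Record VCategory (K : AbsRing) := {
  Obj : Type;
  Hom : Obj -> Obj -> ModuleSpace K;
  comp : forall a b c, Hom b c -> Hom a b -> Hom a c;
  idm : forall a, Hom a a;
  comp_assoc : forall a b c d (h : Hom c d) (g : Hom b c) (f : Hom a b),
      comp a c d h (comp a b c g f) = comp a b d (comp b c d h g) f;
  comp_id_l : forall a b (f : Hom a b), comp a b b (idm b) f = f;
  comp_id_r : forall a b (f : Hom a b), comp a a b f (idm a) = f
}.
Arguments Obj {K}. Arguments Hom {K}. Arguments comp {K} v {a b c}. Arguments idm {K} v.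

Definition is_linear {K : AbsRing} {V W : ModuleSpace K} (f : V -> W) : Prop :=
  (forall x y, f (plus x y) = plus (f x) (f y)) /\
  (forall (k : K) x, f (scal k x) = scal k (f x)).

Definition right_linear {K : AbsRing} (C : VCategory K) : Prop :=
  (forall a a' a'' (c : Hom C a a'), is_linear (fun f : Hom C a' a'' => comp C f c)) /\
  (forall a a' a'' (f : Hom C a' a''), comp C f (zero : Hom C a a') = zero).

Definition linear_cat {K : AbsRing} (C : VCategory K) : Prop :=
  right_linear C /\
  (forall a a' a'' (c : Hom C a' a''), is_linear (fun f : Hom C a a' => comp C c f)) /\
  (forall a a' a'' (f : Hom C a a'), comp C (zero : Hom C a' a'') f = zero).

Definition is_norm {K : AbsRing} {V : ModuleSpace K} (n : V -> R) : Prop :=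
  (forall x, 0 <= n x) /\
  (forall x, n x = 0 <-> x = zero) /\
  (forall (k : K) x, n (scal k x) = abs k * n x) /\
  (forall x y, n (plus x y) <= n x + n y).

Definition complete_wrt {K : AbsRing} {V : ModuleSpace K} (n : V -> R) : Prop :=
  forall u : nat -> V,
    (forall eps, 0 < eps -> exists N, forall p q, (N <= p)%nat -> (N <= q)%nat ->
        n (minus (u p) (u q)) < eps) ->
    exists l : V, forall eps, 0 < eps -> exists N, forall p, (N <= p)%nat ->
        n (minus (u p) l) < eps.

Definition cat_norm {K : AbsRing} (C : VCategory K) :=
  forall a b : Obj C, Hom C a b -> R.

Definition is_cat_norm {K : AbsRing} (C : VCategory K) (nrm : cat_norm C) : Prop :=
  forall a b, is_norm (nrm a b).

Definition submultiplicative {K : AbsRing} (C : VCategory K) (nrm : cat_norm C) : Prop :=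
  (forall a, nrm a a (idm C a) = 1) /\
  (forall a a' a'' (c' : Hom C a' a'') (c : Hom C a a'),
      nrm a a'' (comp C c' c) <= nrm a' a'' c' * nrm a a' c).

Definition banach_cat {K : AbsRing} (B : VCategory K) (nrm : cat_norm B) : Prop :=
  linear_cat B /\ is_cat_norm B nrm /\ submultiplicative B nrm /\
  (forall a b, complete_wrt (nrm a b)).

Record Functor {K : AbsRing} (C B : VCategory K) := {
  Fob : Obj C -> Obj B;
  Fmor : forall a b, Hom C a b -> Hom B (Fob a) (Fob b);
  Fcomp : forall a b c (g : Hom C b c) (f : Hom C a b),
      Fmor a c (comp C g f) = comp B (Fmor b c g) (Fmor a b f);
  Fid : forall a, Fmor a a (idm C a) = idm B (Fob a)
}.
Arguments Fob {K C B}. Arguments Fmor {K C B} f0 {a b}.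

Definition linear_functor {K : AbsRing} {C B : VCategory K} (D : Functor C B) : Prop :=
  forall a b, is_linear (@Fmor K C B D a b).

Definition differential_category {K : AbsRing} (C B : VCategory K) (nrmB : cat_norm B)
    (D : Functor C B) : Prop :=
  right_linear C /\ banach_cat B nrmB /\ linear_functor D /\
  exists nrms : nat -> cat_norm C,
    (forall n, (1 <= n)%nat -> is_cat_norm C (nrms n)) /\
    (forall a a' a'' (c : Hom C a' a'') (c' c'' : Hom C a a'),
        c' <> c'' ->
        Rbar_le
          (LimSup_seq (fun n => nrms n a a'' (minus (comp C c c') (comp C c c''))
                                / nrms n a a' (minus c' c'')))
          (Finite (nrmB _ _ (Fmor D c)))).

(* a functor from G (one-object groupoid) to C, landing at the object a *)
Definition is_representation (G : Group) {K : AbsRing} (C : VCategory K) (a : Obj C)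
    (Rp : gcar G -> Hom C a a) : Prop :=
  Rp (gone G) = idm C a /\
  forall g h, Rp (gmul G g h) = comp C (Rp g) (Rp h).

Definition trivial_rep (G : Group) {K : AbsRing} (C : VCategory K) (a : Obj C)
    (Rp : gcar G -> Hom C a a) : Prop :=
  forall g, Rp g = idm C a.

Definition additive_hom (G : Group) {K : AbsRing} (phi : gcar G -> K) : Prop :=
  forall g h, phi (gmul G g h) = plus (phi g) (phi h).

(* Main.v *)
Require Import Defs.
From Stdlib Require Import Reals Lra Lia Classical ClassicalEpsilon List.
From Coquelicot Require Import Coquelicot.
Import Defs.

Definition shift (x : nat -> R) : nat -> R := fun i => x (S i).
Fixpoint dot (m : nat) (a x : nat -> R) : R :=
  match m with O => 0 | S m' => a O * x O + dot m' (shift a) (shift x) end.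
Definition vadd (x y : nat -> R) : nat -> R := fun i => x i + y i.
Definition vscale (c : R) (x : nat -> R) : nat -> R := fun i => c * x i.
Definition cons0 (y : nat -> R) : nat -> R :=
  fun i => match i with O => 0 | S j => y j end.

Lemma dot_add m : forall a x y, dot m a (vadd x y) = dot m a x + dot m a y.
Proof.
  induction m; intros; simpl. lra.
  change (shift (vadd x y)) with (vadd (shift x) (shift y)).
  rewrite IHm. unfold vadd. lra.
Qed.

Lemma dot_scale m : forall a c x, dot m a (vscale c x) = c * dot m a x.
Proof.
  induction m; intros; simpl. lra.
  change (shift (vscale c x)) with (vscale c (shift x)).
  rewrite IHm. unfold vscale. lra.
Qed.

Lemma dot_ext m : forall a x y, (forall i, (i < m)%nat -> x i = y i) -> dot m a x = dot m a y.
Proof.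
  induction m; intros; simpl. lra.
  rewrite (H O) by lia. rewrite (IHm (shift a) (shift x) (shift y)). lra.
  intros; unfold shift; apply H; lia.
Qed.

Lemma LA m : forall (N : (nat -> R) -> Prop),
  N (fun _ => 0) ->
  (forall x y, N x -> N y -> N (vadd x y)) ->
  (forall c x, N x -> N (vscale c x)) ->
  (forall x y, (forall i, (i < m)%nat -> x i = y i) -> N x -> N y) ->
  forall e, ~ N e -> exists a, (forall z, N z -> dot m a z = 0) /\ dot m a e <> 0.
Proof.
  induction m; intros N H0 Hadd Hsc Hext e He.
  - exfalso. apply He. apply (Hext (fun _ => 0)); auto. intros; lia.
  - set (N' := fun y => N (cons0 y)).
    assert (H0' : N' (fun _ => 0)).
    { unfold N'. apply (Hext (fun _ => 0)); auto. intros [|i] _; reflexivity. }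
    assert (Hadd' : forall x y, N' x -> N' y -> N' (vadd x y)).
    { unfold N'; intros x y Hx Hy. apply (Hext (vadd (cons0 x) (cons0 y))).
      intros [|i] _; unfold vadd; simpl; lra. auto. }
    assert (Hsc' : forall c x, N' x -> N' (vscale c x)).
    { unfold N'; intros c x Hx. apply (Hext (vscale c (cons0 x))).
      intros [|i] _; unfold vscale; simpl; lra. auto. }
    assert (Hext' : forall x y, (forall i, (i < m)%nat -> x i = y i) -> N' x -> N' y).
    { unfold N'; intros x y Hxy Hx. apply (Hext (cons0 x)); auto.
      intros [|i] Hi; simpl; auto. apply Hxy; lia. }
    destruct (classic (exists v, N v /\ v O <> 0)) as [[v [Hv Hv0]]|Hno].
    + set (w := vscale (/ v O) v).
      assert (Hw : N w) by (apply Hsc; auto).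
      assert (Hw0 : w O = 1) by (unfold w, vscale; field; auto).
      set (pi := fun x : nat -> R => fun i => x (S i) - x O * w (S i)).
      assert (Hpi : forall z, N z -> N' (pi z)).
      { intros z Hz. unfold N'. apply (Hext (vadd z (vscale (- z O) w))).
        intros [|i] _; unfold vadd, vscale, pi; simpl. rewrite Hw0; lra. lra.
        apply Hadd; auto. }
      assert (Hpie : ~ N' (pi e)).
      { intro Hc. apply He. apply (Hext (vadd (cons0 (pi e)) (vscale (e O) w))).
        intros [|i] _; unfold vadd, vscale, pi; simpl. rewrite Hw0; lra. lra.
        apply Hadd; auto. }
      destruct (IHm N' H0' Hadd' Hsc' Hext' (pi e) Hpie) as [a' [Ha1 Ha2]].
      exists (fun i => match i with O => - dot m a' (shift w) | S j => a' j end).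
      assert (Hdot : forall x, dot (S m) (fun i => match i with O => - dot m a' (shift w) | S j => a' j end) x = dot m a' (pi x)).
      { intros x. simpl. change (shift (fun i => match i with O => - dot m a' (shift w) | S j => a' j end)) with a'.
        rewrite (dot_ext m a' (pi x) (vadd (shift x) (vscale (- x O) (shift w)))).
        rewrite dot_add, dot_scale. lra. intros; unfold pi, vadd, vscale, shift; lra. }
      split.
      * intros z Hz. rewrite Hdot. apply Ha1, Hpi, Hz.
      * rewrite Hdot. auto.
    + assert (Hno' : forall v, N v -> v O = 0).
      { intros v Hv. destruct (Req_dec (v O) 0); auto. exfalso; apply Hno; eauto. }
      destruct (Req_dec (e O) 0) as [He0|He0].
      * assert (Hse : ~ N' (shift e)).
        { intro Hc. apply He. unfold N' in Hc. apply (Hext (cons0 (shift e))); auto.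
          intros [|i] _; simpl; auto. }
        destruct (IHm N' H0' Hadd' Hsc' Hext' (shift e) Hse) as [a' [Ha1 Ha2]].
        exists (fun i => match i with O => 0 | S j => a' j end).
        assert (Hdot : forall x, dot (S m) (fun i => match i with O => 0 | S j => a' j end) x = dot m a' (shift x)).
        { intros x. simpl. change (shift (fun i => match i with O => 0 | S j => a' j end)) with a'. lra. }
        split.
        -- intros z Hz. rewrite Hdot. apply Ha1. unfold N'. apply (Hext z); auto.
           intros [|i] _; simpl; auto.
        -- rewrite Hdot; auto.
      * exists (fun i => match i with O => 1 | S j => 0 end).
        assert (Hdot : forall x, dot (S m) (fun i => match i with O => 1 | S j => 0 end) x = x O).
        { intros x. simpl. change (shift (fun i => match i with O => 1 | S j => 0 end)) with (fun _ : nat => 0).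
          assert (forall k y, dot k (fun _ => 0) y = 0).
          { induction k; intros; simpl; auto. rewrite IHk. lra. }
          rewrite H. lra. }
        split. intros z Hz; rewrite Hdot; auto. rewrite Hdot; auto.
Qed.

From Stdlib Require Import ssreflect.

Section AG.
Context {G : AbelianGroup}.
Lemma minus_def (a b : G) : minus a b = plus a (opp b). Proof. reflexivity. Qed.
Lemma L3 (a b c : G) : minus a (plus b c) = minus (minus a b) c.
Proof. rewrite !minus_def opp_plus plus_assoc. reflexivity. Qed.
Lemma L4 (a b c : G) : minus (minus a c) (minus b c) = minus a b.
Proof. rewrite !minus_def opp_plus opp_opp (plus_comm (opp b) c) plus_assoc.
  rewrite -(plus_assoc a (opp c) c) plus_opp_l plus_zero_r. reflexivity. Qed.
Lemma Lsub (a b c : G) : minus a b = plus (minus a c) (minus c b).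
Proof. rewrite !minus_def -plus_assoc (plus_assoc (opp c) c) plus_opp_l plus_zero_l. reflexivity. Qed.
Lemma L1 (a b c d : G) : minus (plus a b) (plus c d) = plus (minus a c) (minus b d).
Proof. rewrite !minus_def opp_plus -!plus_assoc. f_equal.
  rewrite (plus_comm b) -plus_assoc. f_equal. apply plus_comm. Qed.
Lemma opp_minus' (a b : G) : opp (minus a b) = minus b a.
Proof. rewrite !minus_def opp_plus opp_opp. apply plus_comm. Qed.
Lemma minus_zero_eq (a b : G) : minus a b = zero -> a = b.
Proof. intros H. rewrite -(plus_zero_r b) -H minus_def.
  rewrite (plus_comm a) plus_assoc plus_opp_r plus_zero_l. reflexivity. Qed.

Lemma id_mul (X P Q I A B : G) :
  minus (minus X I) (plus A B) =
  plus (plus (minus (minus P I) A) (minus (minus Q I) B)) (minus (minus X Q) (minus P I)).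
Proof.
  rewrite -L1 (Lsub (minus X I) (plus A B) (plus (minus P I) (minus Q I))).
  rewrite plus_comm. f_equal.
  rewrite (plus_comm (minus P I)) L3 L4. reflexivity.
Qed.

Lemma id_inv (Pp Q I A : G) :
  minus (minus Pp I) (opp A) =
  opp (plus (minus (minus Q I) A) (minus (minus I Q) (minus Pp I))).
Proof.
  rewrite -(opp_minus' Q I) -L1 plus_opp_r.
  rewrite (minus_def zero) plus_zero_l opp_opp.
  rewrite minus_def opp_opp. apply plus_comm.
Qed.
End AG.

Lemma plus_swap4 {G : AbelianGroup} (a b c d : G) :
  plus (plus a b) (plus c d) = plus (plus a c) (plus b d).
Proof. rewrite -!plus_assoc. f_equal. rewrite !plus_assoc (plus_comm b c). reflexivity. Qed.
Lemma L5 {G : AbelianGroup} (u a b : G) : minus (minus u b) (minus u a) = minus a b.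
Proof. rewrite !minus_def opp_plus opp_opp plus_swap4 plus_opp_r plus_zero_l.
  apply plus_comm. Qed.

Definition ev (i : nat) : nat -> R := fun j => if Nat.eqb j i then 1 else 0.

Section Mod.
Variable K : AbsRing.
Variable iota : R -> K.
Hypothesis iota_plus : forall r s, iota (r + s) = plus (iota r) (iota s).
Hypothesis iota_mult : forall r s, iota (r * s) = mult (iota r) (iota s).
Hypothesis iota_one : iota 1 = one.
Hypothesis iota_abs : forall r, abs (iota r) = Rabs r.
Variable V : ModuleSpace K.

Definition rs (r : R) (v : V) : V := scal (iota r) v.

Lemma iota_zero : iota 0 = zero.
Proof. apply abs_eq_zero. rewrite iota_abs Rabs_R0. reflexivity. Qed.

Lemma iota_m1 : iota (-1) = opp one.
Proof.
  apply (plus_reg_r (iota 1)). rewrite -iota_plus iota_one plus_opp_l.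
  replace (-1 + 1) with 0 by lra. apply iota_zero.
Qed.

Lemma rs_m1 v : rs (-1) v = opp v.
Proof. rewrite /rs iota_m1. exact: scal_opp_one. Qed.

Lemma rs_0 v : rs 0 v = zero.
Proof. rewrite /rs iota_zero. exact: scal_zero_l. Qed.
Lemma rs_1 v : rs 1 v = v.
Proof. rewrite /rs iota_one. exact: scal_one. Qed.

Section Norm.
Variable nrm : V -> R.
Hypothesis Hn : is_norm nrm.
Lemma n_ge0 v : 0 <= nrm v. Proof. apply Hn. Qed.
Lemma n_zero : nrm zero = 0. Proof. apply Hn. reflexivity. Qed.
Lemma n_pos v : v <> zero -> 0 < nrm v.
Proof. intros H. destruct (n_ge0 v) as [|H']; auto. exfalso. apply H. apply Hn. auto. Qed.
Lemma n_tri a b : nrm (plus a b) <= nrm a + nrm b. Proof. apply Hn. Qed.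
Lemma n_rs r v : nrm (rs r v) = Rabs r * nrm v.
Proof. rewrite /rs. destruct Hn as [_ [_ [H _]]]. rewrite H iota_abs. reflexivity. Qed.
Lemma n_opp v : nrm (opp v) = nrm v.
Proof. rewrite -rs_m1 n_rs Rabs_m1. lra. Qed.
Lemma n_minus a b : nrm (minus a b) <= nrm a + nrm b.
Proof. rewrite minus_def. eapply Rle_trans. apply n_tri. rewrite n_opp. lra. Qed.
Lemma n_tri_minus a b : nrm a <= nrm (minus a b) + nrm b.
Proof. replace a with (plus (minus a b) b) at 1. apply n_tri.
  rewrite minus_def -plus_assoc plus_opp_l plus_zero_r. reflexivity. Qed.
End Norm.

Fixpoint comb (L : list V) (x : nat -> R) : V :=
  match L with nil => zero | c :: L' => plus (rs (x O) c) (comb L' (shift x)) end.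
Fixpoint msum (nrm : V -> R) (L : list V) : R :=
  match L with nil => 0 | c :: L' => nrm c + msum nrm L' end.

Lemma comb_add L : forall x y, comb L (vadd x y) = plus (comb L x) (comb L y).
Proof.
  induction L as [|c L IH]; intros; simpl. by rewrite plus_zero_r.
  change (shift (vadd x y)) with (vadd (shift x) (shift y)).
  rewrite IH /rs /vadd iota_plus scal_distr_r. by rewrite plus_swap4.
Qed.

Lemma comb_scale L : forall c x, comb L (vscale c x) = rs c (comb L x).
Proof.
  induction L as [|c0 L IH]; intros; simpl. by rewrite /rs scal_zero_r.
  change (shift (vscale c x)) with (vscale c (shift x)).
  rewrite IH /rs /vscale scal_distr_l iota_mult scal_assoc. reflexivity.
Qed.

Lemma comb_ext L : forall x y, (forall i, (i < length L)%nat -> x i = y i) -> comb L x = comb L y.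
Proof.
  induction L as [|c L IH]; intros x y H; simpl. reflexivity.
  rewrite (H O ltac:(simpl; lia)). rewrite (IH (shift x) (shift y)) //.
  intros i Hi. apply H. simpl. lia.
Qed.

Lemma comb_zero L : comb L (fun _ => 0) = zero.
Proof.
  induction L as [|c L IH]; simpl. reflexivity.
  change (shift (fun _ => 0)) with (fun _ : nat => 0). by rewrite IH rs_0 plus_zero_r.
Qed.

Lemma comb_e L : forall i d, (i < length L)%nat -> comb L (ev i) = nth i L d.
Proof.
  induction L as [|c L IH]; intros i d Hi; simpl in *. lia.
  destruct i as [|i].
  - rewrite (comb_ext L (shift (ev 0)) (fun _ => 0) (fun j _ => eq_refl)).
    by rewrite comb_zero rs_1 plus_zero_r.
  - rewrite (comb_ext L (shift (ev (S i))) (ev i) (fun j _ => eq_refl)).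
    rewrite (IH i d ltac:(lia)) rs_0. by rewrite plus_zero_l.
Qed.

Lemma msum_ge0 nrm L : is_norm nrm -> 0 <= msum nrm L.
Proof. intros Hn. induction L; simpl. lra. pose proof (n_ge0 nrm Hn a). lra. Qed.

Lemma msum_in nrm L c : is_norm nrm -> In c L -> nrm c <= msum nrm L.
Proof.
  intros Hn. induction L as [|c0 L IH]; simpl. tauto.
  intros [->|H]. pose proof (msum_ge0 nrm L Hn); lra.
  pose proof (n_ge0 nrm Hn c0). specialize (IH H). lra.
Qed.

Lemma msum_le nrm L b : (forall i, (i < length L)%nat -> nrm (nth i L zero) <= b) ->
  msum nrm L <= INR (length L) * b.
Proof.
  induction L as [|c L IH]; intros H; cbn [msum length]. simpl; lra.
  rewrite S_INR. assert (H0 : nrm c <= b) by (apply (H O); simpl; lia).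
  assert (msum nrm L <= INR (length L) * b).
  { apply IH. intros i Hi. apply (H (S i)). simpl. apply -> Nat.succ_lt_mono. exact Hi. }
  lra.
Qed.

Lemma comb_bound L : forall y, exists B, 0 <= B /\
  forall nrm, is_norm nrm -> nrm (comb L y) <= B * msum nrm L.
Proof.
  induction L as [|c L IH]; intros y; simpl.
  - exists 0. split. lra. intros nrm Hn. rewrite n_zero //. lra.
  - destruct (IH (shift y)) as [B [HB H]]. exists (Rabs (y O) + B). split.
    pose proof (Rabs_pos (y O)); lra.
    intros nrm Hn. eapply Rle_trans. apply n_tri; auto. rewrite n_rs //.
    specialize (H nrm Hn). pose proof (n_ge0 nrm Hn c). pose proof (msum_ge0 nrm L Hn).
    pose proof (Rabs_pos (y O)).
    assert (Rabs (y O) * nrm c <= Rabs (y O) * (nrm c + msum nrm L)) by (apply Rmult_le_compat_l; lra).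
    assert (B * msum nrm L <= B * (nrm c + msum nrm L)) by (apply Rmult_le_compat_l; lra).
    lra.
Qed.
End Mod.

Section Main.
Variable K : AbsRing.
Variable iota : R -> K.
Hypothesis iota_plus : forall r s, iota (r + s) = plus (iota r) (iota s).
Hypothesis iota_mult : forall r s, iota (r * s) = mult (iota r) (iota s).
Hypothesis iota_one : iota 1 = one.
Hypothesis iota_abs : forall r, abs (iota r) = Rabs r.
Variable G : Group.
Variable S : list (gcar G).
Hypothesis HS : forall g, generated G S g.
Variables (C B : VCategory K) (nrmB : cat_norm B) (D : Functor C B).
Hypothesis HrlC : right_linear C.
Hypothesis HB : banach_cat B nrmB.
Hypothesis HlinD : linear_functor D.
Variable nrms : nat -> cat_norm C.
Hypothesis Hnorms : forall n, (1 <= n)%nat -> is_cat_norm C (nrms n).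
Hypothesis Hlim : forall a a' a'' (c : Hom C a' a'') (c' c'' : Hom C a a'),
        c' <> c'' ->
        Rbar_le
          (LimSup_seq (fun n => nrms n a a'' (minus (comp C c c') (comp C c c''))
                                / nrms n a a' (minus c' c'')))
          (Finite (nrmB _ _ (Fmor D c))).
Variable a : Obj C.
Variable Rp : gcar G -> Hom C a a.
Hypothesis Hrep : is_representation G C a Rp.
Hypothesis HtrivD : forall g, Fmor D (Rp g) = idm B (Fob D a).
Variable s0 : gcar G.
Hypothesis Hs0 : In s0 S.
Hypothesis Hns0 : Rp s0 <> idm C a.

Definition nrm n := nrms n a a.
Lemma Hn n : (1 <= n)%nat -> is_norm (nrm n).
Proof. intros H. apply (Hnorms n H). Qed.

Lemma Nzero n : (1 <= n)%nat -> nrm n zero = 0.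
Proof. intros H. exact (n_zero K _ _ (Hn n H)). Qed.
Lemma Nge0 n v : (1 <= n)%nat -> 0 <= nrm n v.
Proof. intros H. exact (n_ge0 K _ _ (Hn n H) v). Qed.
Lemma Npos n v : (1 <= n)%nat -> v <> zero -> 0 < nrm n v.
Proof. intros H. exact (n_pos K _ _ (Hn n H) v). Qed.
Lemma Ntri n (x y : Hom C a a) : (1 <= n)%nat -> nrm n (plus x y) <= nrm n x + nrm n y.
Proof. intros H. exact (n_tri K _ _ (Hn n H) x y). Qed.
Lemma Nrs n r (v : Hom C a a) : (1 <= n)%nat -> nrm n (rs K iota _ r v) = Rabs r * nrm n v.
Proof. intros H. exact (n_rs K iota iota_abs _ _ (Hn n H) r v). Qed.
Lemma Nopp n (v : Hom C a a) : (1 <= n)%nat -> nrm n (opp v) = nrm n v.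
Proof. intros H. exact (n_opp K iota iota_plus iota_one iota_abs _ _ (Hn n H) v). Qed.
Lemma Nminus n (x y : Hom C a a) : (1 <= n)%nat -> nrm n (minus x y) <= nrm n x + nrm n y.
Proof. intros H. exact (n_minus K iota iota_plus iota_one iota_abs _ _ (Hn n H) x y). Qed.
Lemma Ntrim n (x y : Hom C a a) : (1 <= n)%nat -> nrm n x <= nrm n (minus x y) + nrm n y.
Proof. intros H. exact (n_tri_minus K _ _ (Hn n H) x y). Qed.

Lemma id_mulV (X P Q I A B0 : Hom C a a) :
  minus (minus X I) (plus A B0) =
  plus (plus (minus (minus P I) A) (minus (minus Q I) B0)) (minus (minus X Q) (minus P I)).
Proof. exact (@id_mul (ModuleSpace.AbelianGroup _ (Hom C a a)) X P Q I A B0). Qed.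
Lemma id_invV (Pp Q I A : Hom C a a) :
  minus (minus Pp I) (opp A) =
  opp (plus (minus (minus Q I) A) (minus (minus I Q) (minus Pp I))).
Proof. exact (@id_inv (ModuleSpace.AbelianGroup _ (Hom C a a)) Pp Q I A). Qed.
Lemma L5V (w x y : Hom C a a) : minus (minus w y) (minus w x) = minus x y.
Proof. exact (@L5 (ModuleSpace.AbelianGroup _ (Hom C a a)) w x y). Qed.
Lemma minus_defV (x y : Hom C a a) : minus x y = plus x (opp y).
Proof. reflexivity. Qed.

Lemma comp_minus_l (c c' : Hom C a a) :
  comp C (minus c (idm C a)) c' = minus (comp C c c') c'.
Proof.
  destruct HrlC as [Hl _]. destruct (Hl a a a c') as [Hp Hs].
  rewrite minus_def Hp -scal_opp_one Hs (comp_id_l _ C) scal_opp_one. reflexivity.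
Qed.

Lemma D_minus (c : Hom C a a) :
  Fmor D (minus c (idm C a)) = minus (Fmor D c) (Fmor D (idm C a)).
Proof.
  destruct (HlinD a a) as [Hp Hs].
  rewrite minus_def Hp -scal_opp_one Hs scal_opp_one. reflexivity.
Qed.

Lemma diff0 (c : Hom C a a) : Fmor D c = idm B (Fob D a) ->
  forall (c' c'' : Hom C a a) eps, 0 < eps -> exists N, forall n, (N <= n)%nat ->
  nrm n (minus (minus (comp C c c') c') (minus (comp C c c'') c'')) <= eps * nrm n (minus c' c'').
Proof.
  intros Hc c' c'' eps Heps.
  set (d := minus c (idm C a)).
  assert (Hd : Fmor D d = zero).
  { by rewrite /d D_minus Hc (Fid C B D) minus_eq_zero. }
  destruct (classic (c' = c'')) as [<-|Hne].
  - exists 1%nat. intros n Hn1. rewrite !minus_eq_zero (Nzero n Hn1). lra.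
  - pose proof (Hlim a a a d c' c'' Hne) as Hl0. rewrite Hd in Hl0.
    destruct HB as [_ [HnB _]].
    rewrite (n_zero K _ _ (HnB (Fob D a) (Fob D a))) in Hl0.
    set (f := fun n => nrms n a a (minus (comp C d c') (comp C d c'')) / nrms n a a (minus c' c'')) in Hl0.
    assert (HN : exists N, forall n, (N <= n)%nat -> f n < eps).
    { unfold LimSup_seq in Hl0. destruct (ex_LimSup_seq f) as [l Hl]. simpl in Hl0.
      destruct l as [r| |]; simpl in Hl0, Hl.
      - destruct (Hl (mkposreal eps Heps)) as [_ [N HN]]. exists N. intros n Hnn.
        specialize (HN n Hnn). simpl in HN. lra.
      - contradiction.
      - destruct (Hl eps) as [N HN]. exists N. auto. }
    destruct HN as [N HN]. exists (max N 1). intros n Hnn.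
    assert (Hn1 : (1 <= n)%nat) by lia.
    assert (Hpos : 0 < nrm n (minus c' c'')).
    { apply (Npos n _ Hn1). intros H. apply Hne. by apply minus_zero_eq. }
    specialize (HN n ltac:(lia)). rewrite /f in HN.
    rewrite -!comp_minus_l -/d.
    change (nrms n a a) with (nrm n) in HN.
    apply Rlt_le. apply (Rmult_lt_reg_r (/ nrm n (minus c' c''))). by apply Rinv_0_lt_compat.
    rewrite Rmult_assoc Rinv_r; [|lra]. rewrite Rmult_1_r. exact HN.
Qed.

Definition u g := minus (Rp g) (idm C a).
Definition L := map u S.
Definition cb x := comb K iota (Hom C a a) L x.
Definition M n := msum K (Hom C a a) (nrm n) L.
Definition Rep g x := forall eps, 0 < eps -> exists N, forall n, (N <= n)%nat ->
  nrm n (minus (u g) (cb x)) <= eps * M n.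
Definition Nset z := forall eps, 0 < eps -> exists N, forall n, (N <= n)%nat ->
  nrm n (cb z) <= eps * M n.

Lemma cb_add x y : cb (vadd x y) = plus (cb x) (cb y).
Proof. exact (comb_add K iota iota_plus _ L x y). Qed.
Lemma cb_scale c x : cb (vscale c x) = rs K iota _ c (cb x).
Proof. exact (comb_scale K iota iota_mult _ L c x). Qed.
Lemma cb_m1 x : cb (vscale (-1) x) = opp (cb x).
Proof. rewrite cb_scale. exact (rs_m1 K iota iota_plus iota_one iota_abs _ (cb x)). Qed.
Lemma cb_zero : cb (fun _ => 0) = zero.
Proof. exact (comb_zero K iota iota_abs _ L). Qed.

Lemma M_ge0 n : (1 <= n)%nat -> 0 <= M n.
Proof. intros H. exact (msum_ge0 K _ _ L (Hn n H)). Qed.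

Lemma M_pos n : (1 <= n)%nat -> 0 < M n.
Proof.
  intros H. eapply Rlt_le_trans; [|apply (msum_in K _ _ L (u s0) (Hn n H))].
  - apply Npos; auto. intros Hz. apply Hns0. by apply minus_zero_eq.
  - apply in_map. exact Hs0.
Qed.

Lemma ub_bound h y : Rep h y -> exists Bh N, 0 <= Bh /\ forall n, (N <= n)%nat -> nrm n (u h) <= Bh * M n.
Proof.
  intros Hy. destruct (comb_bound K iota iota_abs _ L y) as [B0 [HB0 HB0']].
  destruct (Hy 1 ltac:(lra)) as [N HN].
  exists (1 + B0), (max N 1). split. lra. intros n Hnn.
  assert (Hn1 : (1 <= n)%nat) by lia.
  eapply Rle_trans. apply (Ntrim n _ (cb y) Hn1).
  specialize (HN n ltac:(lia)). specialize (HB0' (nrm n) (Hn n Hn1)).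
  rewrite /cb /M in HN *. lra.
Qed.

Lemma Rep_mul g h x y : Rep g x -> Rep h y -> Rep (gmul G g h) (vadd x y).
Proof.
  intros Hx Hy eps Heps.
  destruct (ub_bound h y Hy) as [Bh [N0 [HBh HN0]]].
  destruct (Hx (eps/4) ltac:(lra)) as [N1 HN1].
  destruct (Hy (eps/4) ltac:(lra)) as [N2 HN2].
  assert (He2 : 0 < eps / (2 * (1 + Bh))) by (apply Rdiv_lt_0_compat; lra).
  destruct (diff0 (Rp g) (HtrivD g) (Rp h) (idm C a) _ He2) as [N3 HN3].
  exists (max (max N0 N1) (max (max N2 N3) 1)). intros n Hnn.
  assert (Hn1 : (1 <= n)%nat) by lia.
  specialize (HN0 n ltac:(lia)). specialize (HN1 n ltac:(lia)).
  specialize (HN2 n ltac:(lia)). specialize (HN3 n ltac:(lia)).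
  rewrite (comp_id_r _ C) in HN3.
  rewrite {1}/u (proj2 Hrep) cb_add (id_mulV _ (Rp g) (Rp h)).
  eapply Rle_trans. apply Ntri; auto.
  eapply Rle_trans. apply Rplus_le_compat_r. apply Ntri; auto.
  rewrite /u in HN0 HN1 HN2.
  assert (Hm := M_ge0 n Hn1).
  assert (eps / (2 * (1 + Bh)) * nrm n (minus (Rp h) (idm C a)) <= eps / (2 * (1 + Bh)) * ((1 + Bh) * M n)).
  { apply Rmult_le_compat_l. lra. nra. }
  assert (eps / (2 * (1 + Bh)) * ((1 + Bh) * M n) = eps / 2 * M n) by (field; lra).
  lra.
Qed.

Lemma Rep_inv g x : Rep g x -> Rep (ginv G g) (vscale (-1) x).
Proof.
  intros Hx eps Heps.
  destruct (ub_bound g x Hx) as [Bh [N0 [HBh HN0]]].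
  destruct (Hx (eps/2) ltac:(lra)) as [N1 HN1].
  assert (He2 : 0 < eps / (2 * (1 + Bh))) by (apply Rdiv_lt_0_compat; lra).
  destruct (diff0 (Rp (ginv G g)) (HtrivD _) (Rp g) (idm C a) _ He2) as [N3 HN3].
  exists (max (max N0 N1) (max N3 1)). intros n Hnn.
  assert (Hn1 : (1 <= n)%nat) by lia.
  specialize (HN0 n ltac:(lia)). specialize (HN1 n ltac:(lia)).
  specialize (HN3 n ltac:(lia)).
  rewrite -(proj2 Hrep) (gmul_Vl G) (proj1 Hrep) (comp_id_r _ C) in HN3.
  rewrite cb_m1.
  rewrite {1}/u (id_invV _ (Rp g)) Nopp //.
  eapply Rle_trans. apply Ntri; auto.
  rewrite /u in HN0 HN1.
  assert (Hm := M_ge0 n Hn1).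
  assert (eps / (2 * (1 + Bh)) * nrm n (minus (Rp g) (idm C a)) <= eps / (2 * (1 + Bh)) * ((1 + Bh) * M n)).
  { apply Rmult_le_compat_l. lra. nra. }
  assert (eps / (2 * (1 + Bh)) * ((1 + Bh) * M n) = eps / 2 * M n) by (field; lra).
  lra.
Qed.

Lemma Rep_one : Rep (gone G) (fun _ => 0).
Proof.
  intros eps Heps. exists 1%nat. intros n Hn1.
  rewrite /u (proj1 Hrep) minus_eq_zero cb_zero minus_eq_zero Nzero //.
  assert (Hm := M_ge0 n Hn1). nra.
Qed.

Lemma Rep_ev i : (i < length S)%nat -> Rep (nth i S s0) (ev i).
Proof.
  intros Hi eps Heps. exists 1%nat. intros n Hn1.
  assert (HiL : (i < length L)%nat) by (rewrite /L length_map; exact Hi).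
  rewrite /cb (comb_e K iota iota_one iota_abs _ L i (u s0) HiL).
  rewrite /L map_nth minus_eq_zero Nzero //.
  assert (Hm := M_ge0 n Hn1). nra.
Qed.

Lemma Rep_all g : exists x, Rep g x.
Proof.
  induction (HS g) as [x Hx| |x y _ [x1 H1] _ [x2 H2]|x _ [x1 H1]].
  - destruct (In_nth S x s0 Hx) as [i [Hi Hnth]]. exists (ev i). rewrite -Hnth. by apply Rep_ev.
  - exists (fun _ => 0). apply Rep_one.
  - exists (vadd x1 x2). by apply Rep_mul.
  - exists (vscale (-1) x1). by apply Rep_inv.
Qed.

Lemma Rep_diff g x y : Rep g x -> Rep g y -> Nset (vadd x (vscale (-1) y)).
Proof.
  intros Hx Hy eps Heps.
  destruct (Hx (eps/2) ltac:(lra)) as [N1 HN1].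
  destruct (Hy (eps/2) ltac:(lra)) as [N2 HN2].
  exists (max (max N1 N2) 1). intros n Hnn.
  assert (Hn1 : (1 <= n)%nat) by lia.
  specialize (HN1 n ltac:(lia)). specialize (HN2 n ltac:(lia)).
  rewrite cb_add cb_m1.
  rewrite -minus_defV -(L5V (u g)).
  eapply Rle_trans. apply Nminus; auto. lra.
Qed.

Lemma N0 : Nset (fun _ => 0).
Proof.
  intros eps Heps. exists 1%nat. intros n Hn1. rewrite cb_zero Nzero //.
  assert (Hm := M_ge0 n Hn1). nra.
Qed.

Lemma Nadd x y : Nset x -> Nset y -> Nset (vadd x y).
Proof.
  intros Hx Hy eps Heps.
  destruct (Hx (eps/2) ltac:(lra)) as [N1 HN1].
  destruct (Hy (eps/2) ltac:(lra)) as [N2 HN2].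
  exists (max (max N1 N2) 1). intros n Hnn.
  assert (Hn1 : (1 <= n)%nat) by lia.
  specialize (HN1 n ltac:(lia)). specialize (HN2 n ltac:(lia)).
  rewrite cb_add. eapply Rle_trans. apply Ntri; auto. lra.
Qed.

Lemma Nscale c x : Nset x -> Nset (vscale c x).
Proof.
  intros Hx eps Heps.
  assert (Hc := Rabs_pos c).
  destruct (Hx (eps / (Rabs c + 1)) ltac:(apply Rdiv_lt_0_compat; lra)) as [N1 HN1].
  exists (max N1 1). intros n Hnn.
  assert (Hn1 : (1 <= n)%nat) by lia.
  specialize (HN1 n ltac:(lia)).
  rewrite cb_scale Nrs //. rewrite /cb in HN1 *.
  assert (Hm := M_ge0 n Hn1).
  assert (Rabs c * nrm n (comb K iota (Hom C a a) L x) <= Rabs c * (eps / (Rabs c + 1) * M n)).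
  { apply Rmult_le_compat_l; lra. }
  assert (Rabs c * (eps / (Rabs c + 1) * M n) <= eps * M n).
  { assert (Rabs c * (eps / (Rabs c + 1) * M n) = eps * M n * (Rabs c / (Rabs c + 1))) by (field; lra).
    assert (Rabs c / (Rabs c + 1) <= 1).
    { apply (Rmult_le_reg_r (Rabs c + 1)). lra. unfold Rdiv. rewrite Rmult_assoc Rinv_l; lra. }
    assert (0 <= eps * M n) by nra. nra. }
  lra.
Qed.

Lemma Next x y : (forall i, (i < length L)%nat -> x i = y i) -> Nset x -> Nset y.
Proof.
  intros Hxy Hx. rewrite /Nset /cb -(comb_ext K iota _ L x y Hxy). exact Hx.
Qed.

Lemma ev_forall (P : nat -> nat -> Prop) m :
  (forall i, (i < m)%nat -> exists N, forall n, (N <= n)%nat -> P i n) ->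
  exists N, forall n, (N <= n)%nat -> forall i, (i < m)%nat -> P i n.
Proof.
  induction m as [|m IH]; intros H.
  - exists O. intros; lia.
  - destruct IH as [N1 HN1]. { intros i Hi. apply H. lia. }
    destruct (H m ltac:(lia)) as [N2 HN2].
    exists (max N1 N2). intros n Hnn i Hi.
    destruct (Nat.eq_dec i m) as [->|Hne]. apply HN2; lia. apply HN1; lia.
Qed.

Lemma nonmember : exists i, (i < length L)%nat /\ ~ Nset (ev i).
Proof.
  apply NNPP. intros Hno.
  assert (Hall : forall i, (i < length L)%nat -> Nset (ev i)).
  { intros i Hi. apply NNPP. intros Hc. apply Hno. exists i. auto. }
  set (m := length L). set (t := INR m).
  assert (Ht : 0 <= t) by apply pos_INR.
  assert (He : 0 < 1 / (t + 1)) by (apply Rdiv_lt_0_compat; lra).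
  destruct (ev_forall (fun i n => nrm n (cb (ev i)) <= 1 / (t + 1) * M n) m) as [N HN].
  { intros i Hi. apply (Hall i Hi _ He). }
  set (n := max N 1).
  assert (Hn1 : (1 <= n)%nat) by lia.
  specialize (HN n ltac:(lia)).
  assert (Hle : M n <= t * (1 / (t + 1) * M n)).
  { apply msum_le. intros i Hi. rewrite -(comb_e K iota iota_one iota_abs _ L i zero Hi).
    apply HN. exact Hi. }
  assert (Hp := M_pos n Hn1).
  assert (t * (1 / (t + 1) * M n) = M n - M n / (t + 1)) by (field; lra).
  assert (0 < M n / (t + 1)) by (apply Rdiv_lt_0_compat; lra).
  lra.
Qed.

Lemma main_hom : exists phi : gcar G -> R,
  (forall g h, phi (gmul G g h) = phi g + phi h) /\ exists g, phi g <> 0.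
Proof.
  destruct nonmember as [i0 [Hi0 Hni0]].
  destruct (LA (length L) Nset N0 Nadd Nscale Next (ev i0) Hni0) as [w [Hw1 Hw2]].
  set (xs := fun g => proj1_sig (constructive_indefinite_description _ (Rep_all g))).
  assert (Hxs : forall g, Rep g (xs g)).
  { intros g. exact (proj2_sig (constructive_indefinite_description _ (Rep_all g))). }
  assert (Heq : forall g x y, Rep g x -> Rep g y -> dot (length L) w x = dot (length L) w y).
  { intros g x y Hx Hy. pose proof (Hw1 _ (Rep_diff g x y Hx Hy)) as H.
    rewrite dot_add dot_scale in H. lra. }
  exists (fun g => dot (length L) w (xs g)). split.
  - intros g h. rewrite (Heq (gmul G g h) (xs (gmul G g h)) (vadd (xs g) (xs h)) (Hxs _) (Rep_mul _ _ _ _ (Hxs g) (Hxs h))).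
    apply dot_add.
  - exists (nth i0 S s0).
    assert (Hi0' : (i0 < length S)%nat) by (rewrite /L length_map in Hi0; exact Hi0).
    rewrite (Heq (nth i0 S s0) (xs (nth i0 S s0)) (ev i0) (Hxs _) (Rep_ev _ Hi0')).
    exact Hw2.
Qed.
End Main.

Lemma final_K (K : AbsRing) (iota : R -> K)
  (iota_plus : forall r s, iota (r + s) = plus (iota r) (iota s))
  (iota_mult : forall r s, iota (r * s) = mult (iota r) (iota s))
  (iota_one : iota 1 = one)
  (iota_abs : forall r, abs (iota r) = Rabs r) :
  forall (G : Group), finitely_generated G ->
  forall (C B : VCategory K) (nrmB : cat_norm B) (D : Functor C B),
    differential_category C B nrmB D ->
  forall (a : Obj C) (Rp : gcar G -> Hom C a a),
    is_representation G C a Rp ->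
    trivial_rep G C a Rp
    \/ ~ trivial_rep G B (Fob D a) (fun g => Fmor D (Rp g))
    \/ exists phi : gcar G -> K, additive_hom G phi /\ exists g, phi g <> zero.
Proof.
  intros G [S HS] C B nrmB D Hdiff a Rp Hrep.
  destruct Hdiff as [HrlC [HB [HlinD [nrms [Hnorms Hlim]]]]].
  destruct (classic (trivial_rep G C a Rp)) as [Ht|Hnt]. { left; exact Ht. }
  destruct (classic (trivial_rep G B (Fob D a) (fun g => Fmor D (Rp g)))) as [HtD|HntD];
    [|right; left; exact HntD].
  right; right.
  assert (Hex : exists s0, In s0 S /\ Rp s0 <> idm C a).
  { apply NNPP; intro Hno. apply Hnt. intro g.
    induction (HS g) as [x Hx| |x y _ IH1 _ IH2|x _ IH].
    - apply NNPP; intro Hc; apply Hno; eauto.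
    - exact (proj1 Hrep).
    - rewrite (proj2 Hrep) IH1 IH2. apply (comp_id_l _ C).
    - transitivity (comp C (Rp (ginv G x)) (Rp x)).
      + rewrite IH. symmetry. apply (comp_id_r _ C).
      + rewrite -(proj2 Hrep) (gmul_Vl G). exact (proj1 Hrep). }
  destruct Hex as [s0 [Hs0 Hns0]].
  destruct (main_hom K iota iota_plus iota_mult iota_one iota_abs G S HS C B nrmB D
    HrlC HB HlinD nrms Hnorms Hlim a Rp Hrep HtD s0 Hs0 Hns0) as [phi [Hadd [g Hg]]].
  exists (fun g => iota (phi g)). split.
  - intros x y. rewrite /= Hadd. apply iota_plus.
  - exists g. intros Hz. apply Hg. apply Rabs_eq_0. rewrite -iota_abs Hz. apply abs_zero.
Qed.

Theorem theorem3p17 :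
  forall (K : AbsRing), (K = R_AbsRing \/ K = C_AbsRing) ->
  forall (G : Group), finitely_generated G ->
  forall (C B : VCategory K) (nrmB : cat_norm B) (D : Functor C B),
    differential_category C B nrmB D ->
  forall (a : Obj C) (Rp : gcar G -> Hom C a a),
    is_representation G C a Rp ->
    trivial_rep G C a Rp
    \/ ~ trivial_rep G B (Fob D a) (fun g => Fmor D (Rp g))
    \/ exists phi : gcar G -> K, additive_hom G phi /\ exists g, phi g <> zero.
Proof.
  intros K [-> | ->].
  - apply (final_K R_AbsRing (fun r => r)); intros; reflexivity.
  - apply (final_K C_AbsRing RtoC).
    + intros r s. apply RtoC_plus.
    + intros r s. apply RtoC_mult.
    + reflexivity.
    + intros r. apply Cmod_R.
Qed.
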